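(* Let $d\ge1$ and let $X_1,\dots,X_n$ be random variables in the class $\mathcal{S}(d)$. There is a constant $C(d)$ depending only on $d$ such that for every real sequence $(a_i)$ and all $p,u\ge1$, $$\|(a_i)\|_{X,up}\le C(d)\,u^d\,\|(a_i)\|_{X,p}.$$
   Context: $X\in\mathcal{S}(d)$ means $X$ symmetric, $\|X\|_2=1/e$, $\|X\|_{2p}\le2^d\|X\|_p$ for all $p\ge1$, with $\|Z\|_p=(\mathbb{E}|Z|^p)^{1/p}$. $N^X_i(t)=-\ln\mathbb{P}(|X_i|\ge|t|)$; $\hat N^X_i(t)=t^2$ for $|t|\le1$ and $=N^X_i(t)$ for $|t|>1$. $\|(a_i)\|_{X,q}=\sup\{\sum_ia_ix_i:\sum_i\hat N^X_i(x_i)\le q\}$. *)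

(* Defs.v *)
From HB Require Import structures.
From mathcomp Require Import all_boot all_order all_algebra.
From mathcomp Require Import all_classical all_reals all_analysis.
Set Implicit Arguments. Unset Strict Implicit. Unset Printing Implicit Defensive.
Import Order.TTheory GRing.Theory Num.Theory.
Local Open Scope classical_set_scope.
Local Open Scope ring_scope.

Section Defs.
Context {R : realType} {d0 : measure_display} {T : measurableType d0}
  (P : probability T R).

Definition symmetricRV (X : {RV P >-> R}) : Prop :=
  forall B : set R, measurable B ->
    P (X @^-1` B) = P ((fun w => - X w) @^-1` B).

Definition pnorm (p : R) (X : {RV P >-> R}) : \bar R :=
  Lnorm P p%:E (EFin \o X).

Definition classS (d : R) (X : {RV P >-> R}) : Prop :=
  [/\ symmetricRV X,
      pnorm 2 X = ((expR 1)^-1)%:E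
    & forall p : R, 1 <= p -> (pnorm (2 * p) X <= (2 `^ d)%:E * pnorm p X)%E].

Definition tailP (X : {RV P >-> R}) (t : R) : \bar R :=
  P [set w | `|t| <= `|X w|].

Definition NX (X : {RV P >-> R}) (t : R) : \bar R :=
  if tailP X t == 0%E then +oo%E else (- ln (fine (tailP X t)))%:E.

Definition NhatX (X : {RV P >-> R}) (t : R) : \bar R :=
  if `|t| <= 1 then (t ^+ 2)%:E else NX X t.

Definition normX (n : nat) (X : 'I_n -> {RV P >-> R}) (a : 'I_n -> R) (q : R)
  : \bar R :=
  ereal_sup [set (\sum_(i < n) a i * x i)%:E |
               x in [set x : 'I_n -> R |
                       (\sum_(i < n) NhatX (X i) (x i) <= q%:E)%E]].
End Defs.

(* Main.v *)
Require Import Defs.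
From HB Require Import structures.
From mathcomp Require Import all_boot all_order all_algebra.
From mathcomp Require Import all_classical all_reals all_analysis.
From mathcomp Require Import measurable_realfun.
From mathcomp Require Import ring lra.
Import Order.TTheory GRing.Theory Num.Theory.
Local Open Scope classical_set_scope.
Local Open Scope ring_scope.

Section S.
Context (R : realType) (d0 : measure_display) (T : measurableType d0) (P : probability T R).
Local Open Scope ereal_scope.

Definition Iq (X : {RV P >-> R}) (q : R) : \bar R := \int[P]_x (`|X x| `^ q)%:E.

Lemma pnormE (X : {RV P >-> R}) q : pnorm q X = Iq X q `^ q^-1.
Proof. by rewrite /pnorm unlock /Iq. Qed.

Lemma Iq_ge0 X q : 0 <= Iq X q.
Proof. by apply: integral_ge0 => x _; rewrite lee_fin powR_ge0. Qed.

Lemma mes_pow (X : {RV P >-> R}) q : measurable_fun setT (fun x => `|X x| `^ q)%R.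
Proof. apply: (measurableT_comp (measurable_powR _)). apply: measurableT_comp => //. Qed.

Lemma Iq_fin (X : {RV P >-> R}) q M : (0 < q)%R -> pnorm q X = M%:E -> Iq X q = (M `^ q)%:E.
Proof.
move=> q0; rewrite pnormE.
have := Iq_ge0 X q; case: (Iq X q) => [a| |] //= a0.
  case=> <-; rewrite -powRrM mulVf ?gt_eqF// powRr1//.
by rewrite invr_eq0 gt_eqF.
Qed.

Lemma tail_markov (X : {RV P >-> R}) q M r : (0 < q)%R -> pnorm q X = M%:E -> (0 < r)%R ->
  tailP X r <= ((M / `|r|) `^ q)%:E.
Proof.
move=> q0 hM r0.
have r0' : (0 < `|r|)%R by rewrite normr_gt0 gt_eqF.
have := @markov _ _ _ P X (fun x => x `^ q)%R `|r| r0' (measurable_powR _)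
  (fun x _ => powR_ge0 _ _) (fun x y hx hy => ge0_ler_powR (ltW q0) hx hy).
have -> : [set x | `|r|%:E <= `|(X x)%:E|] = [set w | (`|r| <= `|X w|)%R].
  by apply/seteqP; split => x /=; rewrite lee_fin.
rewrite [in X in X -> _]unlock /= -/(tailP X r).
rewrite -/(Iq X q) (@Iq_fin X q M q0 hM).
have a0 : (0 < `|r| `^ q)%R by rewrite powR_gt0.
have M0 : (0 <= M)%R by rewrite -lee_fin -hM pnormE poweR_ge0.
have -> : (M `^ q = (M / `|r|) `^ q * `|r| `^ q)%R.
  by rewrite -powRM ?divr_ge0// divfK// gt_eqF.
rewrite -lee_pdivlMl// -EFinM mulrC mulfK// gt_eqF//.
Qed.
Lemma int_bound (Z W : T -> R) (A : set T) (c lam : R) : measurable A ->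
  measurable_fun setT Z -> measurable_fun setT W ->
  (forall x, 0 <= Z x)%R -> (forall x, 0 <= W x)%R -> (0 <= c)%R -> (0 < lam)%R ->
  (forall x, Z x <= c + W x / lam + lam / 4 * \1_A x)%R ->
  \int[P]_x (Z x)%:E <= c%:E + (\int[P]_x (W x)%:E) * (lam^-1)%:E + (lam/4)%:E * P A.
Proof.
move=> mA mZ mW Z0 W0 c0 l0 H.
have mWl : measurable_fun setT (fun x => (W x / lam)%R).
  exact: measurable_funM.
have mI : measurable_fun setT (fun x => (lam / 4 * \1_A x)%R).
  apply: measurable_funM => //; exact: measurable_indic.
apply: (le_trans (ge0_le_integral _ _ _ _ _ (fun x _ => lee_tofin (H x)))) => //.
- by move=> x _; rewrite lee_fin.
- exact/measurable_EFinP.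
- apply/measurable_EFinP; apply: measurable_funD => //; exact: measurable_funD.
rewrite (_ : (fun x => _) = (fun x => (c + W x / lam)%:E + (lam / 4 * \1_A x)%:E)); last first.
  by apply: funext => x; rewrite EFinD.
have p1 : forall x, [set: T] x -> 0 <= (c + W x / lam)%:E.
  by move=> x _; rewrite lee_fin addr_ge0// divr_ge0// ltW.
have p2 : forall x, [set: T] x -> 0 <= (lam / 4 * \1_A x)%:E.
  by move=> x _; rewrite lee_fin mulr_ge0// divr_ge0// ltW.
have m1 : measurable_fun setT (fun x => (c + W x / lam)%:E).
  apply/measurable_EFinP; exact: measurable_funD.
have m2 : measurable_fun setT (fun x => (lam / 4 * \1_A x)%:E).
  exact/measurable_EFinP.
rewrite ge0_integralD//.
rewrite (_ : (fun x => _) = (fun x => (cst c%:E x) + (W x / lam)%:E)); last first.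
  by apply: funext => x; rewrite EFinD.
have p3 : forall x, [set: T] x -> 0 <= (W x / lam)%:E.
  by move=> x _; rewrite lee_fin divr_ge0// ltW.
have m3 : measurable_fun setT (fun x => (W x / lam)%:E).
  exact/measurable_EFinP.
have p4 : forall x, [set: T] x -> 0 <= cst c%:E x by move=> x _; rewrite lee_fin.
rewrite ge0_integralD//.
rewrite integral_cst//.
rewrite [X in c%:E * X](_ : _ = 1%E); last exact: probability_setT.
rewrite mule1.
rewrite (_ : (fun x => (W x / lam)%:E) = (fun x => (W x)%:E * (lam^-1)%:E)); last first.
  by apply: funext => x; rewrite EFinM.
rewrite ge0_integralZr//; last 3 first.
- exact/measurable_EFinP.
- by move=> x _; rewrite lee_fin.
- by rewrite lee_fin invr_ge0 ltW.
rewrite (_ : (fun x => (lam / 4 * \1_A x)%:E) = (fun x => (lam/4)%:E * (\1_A x)%:E)); last first.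
  by apply: funext => x; rewrite EFinM.
have m4 : measurable_fun setT (fun x => (\1_A x : R)%:E).
  by apply/measurable_EFinP; exact: measurable_indic.
rewrite ge0_integralZl//; last first.
all: try by move=> x _; rewrite lee_fin.
all: try by rewrite lee_fin divr_ge0// ltW.
by rewrite integral_indic// setIT.
Qed.

Lemma mes_tail (X : {RV P >-> R}) (c : R) : measurable [set w | (c <= `|X w|)%R].
Proof.
have mf : measurable_fun setT (fun w => `|X w|)%R by apply: measurableT_comp.
have := mf measurableT _ (measurable_itv `[c, +oo[); rewrite setTI.
rewrite (_ : _ @^-1` _ = [set w | (c <= `|X w|)%R])//.
by apply/seteqP; split => w /=; rewrite in_itv/= andbT.
Qed.

Lemma tail_pz (X : {RV P >-> R}) q M1 M2 : (2 <= q)%R -> pnorm q X = M1%:E ->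
  pnorm (2 * q) X = M2%:E -> (0 < M1)%R ->
  (0 < M2)%R /\ ((M1 `^ q) ^+ 2 / (2 * M2 `^ (2 * q)))%:E <= tailP X (M1 / 2).
Proof.
move=> q2 h1 h2 m10.
have q0 : (0 < q)%R by apply: lt_le_trans q2.
have M20 : (0 <= M2)%R by rewrite -lee_fin -h2 pnormE poweR_ge0.
set a := (M1 `^ q)%R; set b := (M2 `^ (2 * q))%R.
have a0 : (0 < a)%R by rewrite powR_gt0.
have b0 : (0 <= b)%R by rewrite powR_ge0.
have Ia := @Iq_fin X q M1 q0 h1.
have Ib := @Iq_fin X (2 * q)%R M2 (mulr_gt0 (ltr0Sn _ _) q0) h2.
set A := [set w | (`|M1 / 2| <= `|X w|)%R].
have mA : measurable A by apply: mes_tail.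
have ZW x : (`|X x| `^ (2 * q) = (`|X x| `^ q) ^+ 2)%R.
  by rewrite mulrC powRrM -(powR_mulrn _ (powR_ge0 _ _)).
have hoff x : (`|X x| < `|M1 / 2|)%R -> (`|X x| `^ q <= a / 4)%R.
  move=> hx.
  have h : (`|X x| `^ q <= `|M1 / 2| `^ q)%R.
    by apply: ge0_ler_powR; rewrite ?nnegrE// ltW.
  apply: (le_trans h).
  have m20 : (0 <= M1 / 2)%R by rewrite divr_ge0// ltW.
  rewrite ger0_norm// powRM ?invr_ge0 ?ler0n ?(ltW m10)//.
  rewrite -/a ler_wpM2l ?(ltW a0)//.
  have h3 : (2^-1 `^ q <= 2^-1 `^ 2 :> R)%R.
    by apply: ger_powR => //; rewrite invr_gt0 ltr0Sn /= invf_le1 ?ler1n.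
  apply: (le_trans h3).
  rewrite (powR_mulrn 2 (_ : 0 <= 2^-1)%R) ?invr_ge0 ?ler0n//. by rewrite exprVn -natrX.
have pA : P A = (fine (P A))%:E.
  rewrite fineK// ge0_fin_numE ?measure_ge0//.
  exact: (le_lt_trans (probability_le1 P mA) (ltry _)).
have pA0 : (0 <= fine (P A))%R by rewrite -lee_fin -pA measure_ge0.
have pA1 : (fine (P A) <= 1)%R by rewrite -lee_fin -pA probability_le1.
have key lam : (0 < lam)%R ->
    (a <= a / 4 + b / lam + lam / 4 * fine (P A))%R.
  move=> l0.
  have pt x : (`|X x| `^ q <= a / 4 + `|X x| `^ (2 * q) / lam + lam / 4 * \1_A x)%R.
    rewrite indicE ZW; set z := (`|X x| `^ q)%R.
    have z0 : (0 <= z)%R by apply: powR_ge0.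
    case: (boolP (x \in A)) => hx.
      have e : (z ^+ 2 / lam + lam / 4 * 1%:R - z = (z - lam / 2) ^+ 2 / lam)%R.
        by field; rewrite gt_eqF.
      have : (0 <= z ^+ 2 / lam + lam / 4 * 1%:R - z)%R.
        by rewrite e divr_ge0 ?sqr_ge0 ?ltW.
      have : (0 <= a / 4)%R by rewrite divr_ge0 ?ltW.
      rewrite /= ?mulr1n ?mulr1; lra.
    have hlt : (`|X x| < `|M1 / 2|)%R.
      rewrite ltNge; apply/negP => h; apply/negP: hx; rewrite negbK.
      by rewrite inE.
    have := hoff x hlt; rewrite -/z.
    have : (0 <= z ^+ 2 / lam)%R by rewrite divr_ge0 ?sqr_ge0 ?ltW.
    rewrite /= ?mulr0n ?mulr0; lra.
  have := @int_bound (fun x => `|X x| `^ q)%R (fun x => `|X x| `^ (2 * q))%R A (a / 4) lam mA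
    (mes_pow X q) (mes_pow X (2 * q)%R) (fun x => powR_ge0 _ _) (fun x => powR_ge0 _ _)
    (divr_ge0 (ltW a0) (ler0n _ _)) l0 pt.
  rewrite -/(Iq X q) -/(Iq X (2 * q)%R) Ia Ib pA -!EFinM -!EFinD lee_fin.
  by rewrite -/a -/b.
have b0' : (0 < b)%R.
  have k := key a a0.
  have hh1 : (a / 4 * fine (P A) <= a / 4 * 1)%R.
    by rewrite ler_wpM2l// divr_ge0 ?ltW.
  have hh2 : (0 < b / a)%R by lra.
  by rewrite -(divfK (lt0r_neq0 a0) b) mulr_gt0.
split.
  rewrite lt_neqAle M20 andbT; apply/negP => /eqP M2e.
  by move: b0'; rewrite /b -M2e powR0 ?ltxx// mulf_neq0// gt_eqF.
have k := key (4 * b / a)%R (divr_gt0 (mulr_gt0 (ltr0Sn _ _) b0') a0).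
have e1 : (b / (4 * b / a) = a / 4)%R by field; rewrite !gt_eqF.
have e2 : (4 * b / a / 4 * fine (P A) = b / a * fine (P A))%R by field; rewrite gt_eqF.
rewrite e1 e2 in k.
have k2 : (a / 2 <= b / a * fine (P A))%R by lra.
rewrite /tailP -/A pA lee_fin ler_pdivrMr ?mulr_gt0//.
have e3 : (a ^+ 2 = 2 * a * (a / 2))%R by field.
have e4 : (fine (P A) * (2 * b) = 2 * a * (b / a * fine (P A)))%R by field; rewrite gt_eqF.
by rewrite e3 e4 ler_wpM2l// mulr_ge0// ltW.
Qed.

Lemma fin_of_le (x : \bar R) (y : R) : (0 <= x)%E -> (x <= y%:E)%E -> x = (fine x)%:E.
Proof.
move=> x0 xy; rewrite fineK// ge0_fin_numE//; exact: (le_lt_trans xy (ltry _)).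
Qed.
Arguments fin_of_le {x y}.

Local Close Scope ereal_scope.
Variable d : R.
Hypothesis hd : 1 <= d.

Definition Mk (X : {RV P >-> R}) k := fine (pnorm (2 ^+ k.+1) X).

Lemma Mk_spec (X : {RV P >-> R}) : classS d X ->
  forall k, pnorm (2 ^+ k.+1) X = (Mk X k)%:E /\ 0 <= Mk X k.
Proof.
case=> _ h2 h3; elim => [|k [IH1 IH2]].
  by rewrite /Mk expr1 h2 /= invr_ge0 expR_ge0.
have h := h3 (2 ^+ k.+1) (exprn_ege1 _ (ler1n _ 2)).
rewrite -exprS IH1 -EFinM in h.
have p0 : (0 <= pnorm (2 ^+ k.+2) X)%E by rewrite pnormE poweR_ge0.
have := fin_of_le p0 h; rewrite -/(Mk X k.+1) => ->; split => //.
by rewrite -lee_fin -(fin_of_le p0 h).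
Qed.
Arguments Mk_spec {X}.

Lemma Mk0 (X : {RV P >-> R}) : classS d X -> Mk X 0 = (expR 1)^-1.
Proof. by case=> _ h2 _; rewrite /Mk expr1 h2. Qed.

Lemma MkS (X : {RV P >-> R}) : classS d X -> forall k, Mk X k.+1 <= 2 `^ d * Mk X k.
Proof.
move=> hX k; have [_ _ h3] := hX.
have h := h3 (2 ^+ k.+1) (exprn_ege1 _ (ler1n _ 2)).
by rewrite -exprS (Mk_spec hX k).1 (Mk_spec hX k.+1).1 -EFinM lee_fin in h.
Qed.

Lemma T1 (X : {RV P >-> R}) : classS d X -> forall k (t : R), t != 0 ->
  Mk X k <= `|t| / expR 1 -> ((2 ^+ k.+1)%:E <= NX X t)%E.
Proof.
move=> hX k t t0 hk.
have q0 : 0 < 2 ^+ k.+1 :> R by rewrite exprn_gt0.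
have r0 : 0 < `|t| by rewrite normr_gt0.
have hm := @tail_markov X (2 ^+ k.+1) (Mk X k) `|t| q0 (Mk_spec hX k).1 r0.
have ht : tailP X t = tailP X `|t| by rewrite /tailP normr_id.
have hb : (Mk X k / `| `|t| | ) `^ (2 ^+ k.+1) <= expR (- 2 ^+ k.+1).
  rewrite normr_id -mulN1r expRM expRN.
  have m0 := (Mk_spec hX k).2.
  apply: ge0_ler_powR; rewrite ?nnegrE.
  - exact: ltW.
  - by rewrite divr_ge0.
  - by rewrite invr_ge0 expR_ge0.
  by rewrite ler_pdivrMr// mulrC.
rewrite /NX; case: ifPn => [_|tn0]; first exact: leey.
have tp0 : (0 <= tailP X t)%E by apply: measure_ge0.
have hle : (tailP X t <= (expR (- 2 ^+ k.+1))%:E)%E by rewrite ht (le_trans hm) ?lee_fin.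
have tfe := fin_of_le tp0 hle.
have fp : 0 < fine (tailP X t).
  by rewrite lt_neqAle -lee_fin -tfe tp0 andbT eq_sym -(@eqe R) -tfe.
rewrite lee_fin lerNr -[X in _ <= X]expRK ler_ln ?posrE ?expR_gt0//.
by rewrite -lee_fin -tfe.
Qed.

Lemma ln2_le1 : ln (2 : R) <= 1.
Proof.
rewrite -[X in _ <= X]expRK ler_ln ?posrE ?expR_gt0//.
by have := expR_ge1Dx (1 : R).
Qed.

Lemma T2 (X : {RV P >-> R}) : classS d X -> forall k (s : R), 0 < Mk X k ->
  `|s| <= Mk X k / 2 -> (NX X s <= (2 ^+ k.+1 * (1 + 2 * d))%:E)%E.
Proof.
move=> hX k s m0 hs.
set q : R := 2 ^+ k.+1.
have q2 : 2 <= q by rewrite /q exprS ler_peMr// exprn_ege1// ler1n.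
have h2' : pnorm (2 * q) X = (Mk X k.+1)%:E by rewrite /q -exprS (Mk_spec hX k.+1).1.
have [M20 hpz] := @tail_pz X q (Mk X k) (Mk X k.+1) q2 (Mk_spec hX k).1 h2' m0.
set a := Mk X k `^ q in hpz; set b := Mk X k.+1 `^ (2 * q) in hpz.
set L := (2 `^ d) `^ (2 * q).
have L0 : 0 < L by rewrite powR_gt0// powR_gt0.
have a0 : 0 < a by rewrite powR_gt0.
have b0 : 0 < b by rewrite powR_gt0.
have hb : b <= L * a ^+ 2.
  rewrite /a -(powR_mulrn _ (powR_ge0 _ _)) -powRrM mulrC /L (mulrC q 2).
  rewrite -powRM ?powR_ge0 ?(ltW m0)//.
  apply: ge0_ler_powR; rewrite ?nnegrE ?mulr_ge0 ?powR_ge0 ?(ltW m0) ?(ltW M20)//.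
  - by rewrite /q exprn_ge0.
  by rewrite mulrC MkS.

have hlow : (2 * L)^-1 <= a ^+ 2 / (2 * b).
  rewrite ler_pdivlMr ?mulr_gt0//.
  have -> : (2 * L)^-1 * (2 * b) = b / L by field; rewrite !gt_eqF.
  by rewrite ler_pdivrMr// mulrC.
have hmon : (tailP X (Mk X k / 2) <= tailP X s)%E.
  apply: le_measure; rewrite ?inE; try exact: mes_tail.
  move=> w /=; apply: le_trans.
  by rewrite [`|Mk X k / 2|]ger0_norm // divr_ge0 // ltW.
have hP : (((2 * L)^-1)%:E <= tailP X s)%E.
  by apply: le_trans hmon; apply: le_trans hpz; rewrite lee_fin.
have tp0 : (0 <= tailP X s)%E by apply: measure_ge0.
have hle : (tailP X s <= 1%:E)%E by apply: probability_le1; exact: mes_tail.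
have tfe := fin_of_le tp0 hle.
have i0 : 0 < (2 * L)^-1 by rewrite invr_gt0 mulr_gt0.
have fp : (2 * L)^-1 <= fine (tailP X s) by rewrite -lee_fin -tfe.
rewrite /NX ifF; last first.
  by apply/negP => /eqP h0; move: hP; rewrite h0 lee_fin leNgt i0.
rewrite lee_fin lerNl.
apply: (le_trans _ (_ : ln ((2 * L)^-1) <= _)); last first.
  by rewrite ler_ln ?posrE// (lt_le_trans i0).
rewrite lnV ?posrE ?mulr_gt0// lnM ?posrE// /L !ln_powR. 
have l2 := ln2_le1.
have l20 : 0 <= ln (2 : R) by rewrite ln_ge0// ler1n.
have q1 : 1 <= q by apply: le_trans q2; rewrite ler1n.
have : 2 * q * (d * ln 2) <= 2 * q * d.
  rewrite ler_wpM2l ?mulr_ge0 ?(le_trans _ q1)//.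
  by rewrite ger_pMr ?(lt_le_trans _ hd).
lra.
Qed.

Lemma ex_pow2 (x : R) : exists n, x <= 2 ^+ n.
Proof.
exists (Num.trunc x).+1; apply: (le_trans (ltW (truncnS_gt x))).
by rewrite -natrX ler_nat ltnW// ltn_expl.
Qed.

Lemma pow2d j : (2 `^ d) ^+ j = (2 ^+ j) `^ d.
Proof.
rewrite -(powR_mulrn _ (powR_ge0 _ _)) -powRrM -(powR_mulrn j (_ : 0 <= 2)) ?ler0n//.
by rewrite -powRrM mulrC.
Qed.

Lemma Mk_shift (X : {RV P >-> R}) : classS d X -> forall k j,
  Mk X (k + j) <= (2 `^ d) ^+ j * Mk X k.
Proof.
move=> hX k; elim => [|j IH]; first by rewrite addn0 expr0 mul1r.
rewrite addnS (le_trans (MkS X hX _))// exprS -mulrA ler_wpM2l ?powR_ge0//.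
Qed.

Definition Kd := 1 + 2 * d.
Definition Cd := 2 * expR 1 * (4 * Kd) `^ d.

Lemma Kd_ge1 : 1 <= Kd.
Proof. rewrite /Kd lerDl mulr_ge0// (le_trans _ hd)//. Qed.

Lemma Cd_ge : 2 * expR 1 <= Cd.
Proof.
rewrite /Cd ler_peMr ?mulr_ge0 ?expR_ge0//.
apply: (le_trans (_ : 1 <= 1 `^ d)); first by rewrite powR1.
apply: ge0_ler_powR; rewrite ?nnegrE ?(le_trans _ hd)//.
  by rewrite mulr_ge0// (le_trans _ Kd_ge1).
by apply: (le_trans Kd_ge1); rewrite ler_peMl ?(le_trans _ Kd_ge1) ?ler1n.
Qed.

Lemma key (X : {RV P >-> R}) : classS d X -> forall u t : R, 1 <= u ->
  (u%:E * NhatX X (t / (Cd * u `^ d)) <= NhatX X t)%E.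
Proof.
move=> hX u t u1.
have dp : 0 <= d by apply: le_trans hd.
have e0 : 0 < expR 1 :> R by apply: expR_gt0.
have e1 : 1 <= expR 1 :> R by rewrite -expR0 ler_expR.
have C1 : 1 <= Cd.
  by apply: le_trans Cd_ge; rewrite (le_trans e1)// ler_peMl ?ler1n ?(ltW e0).
have ud1 : 1 <= u `^ d.
  apply: (le_trans (_ : 1 <= 1 `^ d)); first by rewrite powR1.
  by apply: ge0_ler_powR; rewrite ?nnegrE ?(le_trans _ u1).
have uud : u <= u `^ d by apply: le1r_powR.
set c := Cd * u `^ d.
have c1 : 1 <= c by exact: (mulr_ege1 C1 ud1).
have c0 : 0 < c by exact: (lt_le_trans ltr01 c1).
have uc : u <= c by rewrite (le_trans uud)// ler_peMl// (le_trans _ ud1).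
set s := t / c.
have hs : `|s| = `|t| / c by rewrite /s normrM normfV (gtr0_norm c0).
have hts : `|t| = c * `|s| by rewrite hs mulrC divfK// gt_eqF.
rewrite /NhatX.
have [ht|ht] := leP `|t| 1.
  have hs1 : `|s| <= 1.
    by rewrite hs ler_pdivrMr// (le_trans ht)// ler_peMr.
  rewrite hs1 -EFinM lee_fin /s expr_div_n mulrA ler_pdivrMr ?exprn_gt0//.
  rewrite mulrC ler_wpM2l ?sqr_ge0//.
  by rewrite (le_trans uc)// expr2 ler_peMr ?(ltW c0).
have t0 : t != 0 by rewrite -normr_gt0 (lt_trans ltr01 ht).
have ht' : (`|t| <= 1) = false by rewrite leNgt ht.

have [hs1|hs1] := leP `|s| 1.

  set x := u * s ^+ 2.
  have exP : exists j, x <= 2 ^+ j.+1.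
    have [n hn] := ex_pow2 x; exists n; apply: (le_trans hn).
    by rewrite exprS ler_peMl ?exprn_ge0 ?ler1n.
  case: (ex_minnP exP) => j hj hmin.
  have hM : Mk X j <= `|t| / expR 1.
    have := Mk_shift X hX 0 j; rewrite add0n (Mk0 X hX) => hj0.
    apply: (le_trans hj0); rewrite ler_pM2r ?invr_gt0//.
    case: j hj hmin {hj0} => [|j] hj hmin.
      by rewrite expr0 ltW.
    have hlt : 2 ^+ j.+1 < x.
      by rewrite ltNge; apply/negP => h; have := hmin j h; rewrite ltnn.
    have s20 : 0 < s ^+ 2.
      rewrite lt_neqAle sqr_ge0 andbT; apply/negP => /eqP h0; move: hlt.
      by rewrite /x -h0 mulr0 ltNge exprn_ge0.
    have s2s : s ^+ 2 <= `|s|.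
      by rewrite -[s ^+ 2]ger0_norm ?sqr_ge0// normrX expr2 ler_piMr.
    rewrite pow2d.
    apply: (le_trans (ge0_ler_powR dp _ _ (ltW hlt))); rewrite ?nnegrE ?exprn_ge0//.
      by rewrite /x mulr_ge0 ?sqr_ge0// (le_trans _ u1).
    rewrite /x powRM ?sqr_ge0 ?(le_trans _ u1)//.
    have h1 : (s ^+ 2) `^ d <= s ^+ 2.
      by apply: ge1r_powR => //; rewrite s20 (le_trans s2s).
    rewrite hts (le_trans (ler_wpM2l (powR_ge0 _ _) (le_trans h1 s2s)))//.
    by rewrite ler_wpM2r// /c ler_peMl// (le_trans _ ud1).
  apply: le_trans (T1 X hX j t t0 hM).
  by rewrite -EFinM lee_fin.
have hs' : (`|s| <= 1) = false by rewrite leNgt hs1.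

have [tz|tn0] := eqVneq (tailP X t) 0%E.
  by rewrite [NX X t]/NX tz eqxx; exact: leey.
set N := - ln (fine (tailP X t)).
have hN : NX X t = N%:E by rewrite /NX (negbTE tn0).
have T1' k : Mk X k <= `|t| / expR 1 -> ((2 ^+ k.+1)%:E <= N%:E)%E.
  by move=> h; rewrite -hN; apply: T1.
have c2e : 2 * expR 1 <= c by rewrite /c (le_trans Cd_ge)// ler_peMr// (le_trans _ C1).
have s2t : 2 * `|s| <= `|t| / expR 1.
  rewrite hts ler_pdivlMr// mulrAC ler_wpM2r// mulrC.
case: (pselect (exists k, 2 * `|s| <= Mk X k)) => [exk|nexk]; last first.
  exfalso; have [n hn] := ex_pow2 N.
  have hk : Mk X n <= `|t| / expR 1.
    apply: le_trans s2t; rewrite leNgt; apply/negP => h.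
    by apply: nexk; exists n; apply: ltW.
  have := T1' n hk; rewrite lee_fin exprS => h.
  have : 0 < 2 ^+ n :> R by rewrite exprn_gt0.
  lra.
case: (ex_minnP exk) => k hk kmin.
case: k hk kmin => [|k'] hk kmin.
  exfalso; move: hk; rewrite (Mk0 X hX).
  have : (expR 1)^-1 <= 1 :> R by rewrite invf_le1.
  lra.
have hk' : Mk X k' < 2 * `|s|.
  by rewrite ltNge; apply/negP => h; have := kmin k' h; rewrite ltnn.
have m0 : 0 < Mk X k'.+1 by apply: lt_le_trans hk; lra.
have hT2 := T2 X hX k'.+1 s m0 (_ : `|s| <= Mk X k'.+1 / 2).
have exj : exists j, u * Kd <= 2 ^+ j := ex_pow2 _.
case: (ex_minnP exj) => j hj jmin.
have uK1 : 1 <= u * Kd by apply: mulr_ege1 => //; exact: Kd_ge1.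
have hp : 2 ^+ j.+1 <= 4 * (u * Kd).
  case: j hj jmin => [|j] hj jmin.
    rewrite expr1; lra.
  have : 2 ^+ j < u * Kd.
    by rewrite ltNge; apply/negP => h; have := jmin j h; rewrite ltnn.
  rewrite !exprS; lra.
have hM : Mk X (k'.+1 + j) <= `|t| / expR 1.
  rewrite addSnnS.
  apply: (le_trans (Mk_shift X hX k' j.+1)).
  rewrite pow2d.
  have h1 : (2 ^+ j.+1) `^ d <= (4 * Kd) `^ d * u `^ d.
    rewrite -powRM ?mulr_ge0 ?(le_trans _ Kd_ge1) ?(le_trans _ u1)//.
    apply: ge0_ler_powR; rewrite ?nnegrE ?exprn_ge0 ?mulr_ge0 ?(le_trans _ Kd_ge1) ?(le_trans _ u1)//.
    by rewrite -mulrA [Kd * u]mulrC.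
  have -> : `|t| / expR 1 = (4 * Kd) `^ d * u `^ d * (2 * `|s|).
    by rewrite hts /c /Cd; field; rewrite gt_eqF.
  apply: ler_pM => //; try exact: powR_ge0.
  - exact: (Mk_spec hX k').2.
  - exact: ltW.
have hfin := T1' _ hM.
apply: (@le_trans _ _ ((u * (2 ^+ k'.+2 * Kd))%:E)).
  rewrite EFinM; apply: lee_wpmul2l; first by rewrite lee_fin (le_trans _ u1).
  apply: hT2; rewrite ler_pdivlMr//; lra.
rewrite hN; apply: le_trans hfin; rewrite lee_fin -addSn exprD mulrCA.
by rewrite ler_wpM2l ?exprn_ge0.
Qed.

Lemma NhatX_ge0 (X : {RV P >-> R}) (t : R) : (0 <= NhatX X t)%E.
Proof.
rewrite /NhatX; case: ifP => _; first by rewrite lee_fin sqr_ge0.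
rewrite /NX; case: ifP => _; first exact: leey.
have tp0 : (0 <= tailP X t)%E by apply: measure_ge0.
have hle : (tailP X t <= 1%:E)%E by apply: probability_le1; exact: mes_tail.
have tfe := fin_of_le tp0 hle.
by rewrite lee_fin oppr_ge0 ln_le0// -lee_fin -tfe.
Qed.
End S.

Theorem lemma3p3 (R : realType) (d : R) (hd : 1 <= d) :
  exists C : R,
    forall (d0 : measure_display) (T : measurableType d0)
           (P : probability T R) (n : nat) (X : 'I_n -> {RV P >-> R}),
      (forall i, classS d (X i)) ->
      forall (a : 'I_n -> R) (p u : R), 1 <= p -> 1 <= u ->
        (normX X a (u * p) <= (C * u `^ d)%:E * normX X a p)%E.
Proof.
exists (Cd R d) => d0 T P n X hX a p u p1 u1.
have dp : 0 <= d by apply: le_trans hd.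
have u0 : 0 < u by apply: lt_le_trans u1.
set c := Cd R d * u `^ d.
have c0 : 0 < c.
  apply: mulr_gt0; last by apply: powR_gt0.
  apply: lt_le_trans (Cd_ge R d hd); by rewrite mulr_gt0 ?expR_gt0.
apply: ge_ereal_sup => _ [x hx <-].
set y := fun i => x i / c.
have hy : (\sum_(i < n) NhatX (X i) (y i) <= p%:E)%E.
  have h1 : (\sum_(i < n) (u%:E * NhatX (X i) (y i)) <= (u * p)%:E)%E.
    apply: le_trans hx; apply: lee_sum => i _.
    exact: (key R d0 T P d hd (X i) (hX i) u (x i) u1).
  rewrite -ge0_sume_distrr in h1; last by move=> i _; apply: NhatX_ge0.
  rewrite -lee_pdivlMl// in h1.
  by rewrite -EFinM mulKf ?gt_eqF in h1.
have -> : \sum_(i < n) a i * x i = c * \sum_(i < n) a i * y i.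
  rewrite mulr_sumr; apply: eq_bigr => i _.
  by rewrite /y; field; apply: lt0r_neq0.
rewrite EFinM; apply: lee_wpmul2l; first by rewrite lee_fin ltW.
apply: ereal_sup_ubound; exists y => //.
Qed.
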